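(* Let $S$ be a Rauzy scheme for a recurrent infinite word $W$, let $l_{\max}$ be the maximum length of the words written on the edges of $S$, and let $A$ be a finite factor of $W$. If $s$ is a nonextendable path in $S(A)$, then $|A|-2l_{\max}\le|F(s)|\le|A|$.
   Context: For a finite factor $A$ of $W$, $S(A)$ denotes the set of symmetric paths $s$ of $S$ with $F(s)\sqsubseteq A$; a path $s\in S(A)$ is nonextendable if there is no $s'\in S(A)$ with $s\sqsubseteq s'$ and $s'\neq s$. An infinite word is recurrent if every factor occurs infinitely often. $u\sqsubseteq w$: $u$ is a factor of $w$; $u\sqsubseteq_k w$: $u$ occurs in $w$ at least $k$ times. A graph with words is a strongly connected finite directed graph (multiple edges and loops allowed) in which every edge $e$ carries a front word $F(e)$ and a back word $B(e)$, and every vertex either has in-degree $1$ and out-degree $>1$ (distributing vertex) or in-degree $>1$ and out-degree $1$ (collecting vertex). A path is a finite nonempty sequence of edges $v_1\dots v_n$ with each $v_{i+1}$ starting where $v_i$ ends; subpaths and $s_1\sqsubseteq s_2$, $s_1\sqsubseteq_k s_2$ are defined via edge records (words over the alphabet of edges). A path is symmetric if its first edge starts at a collecting vertex and its last edge ends at a distributing vertex. For $s=v_1\dots v_n$, $F(s)$ is the concatenation, in order, of the front words of $v_1$ and of all $v_i$ ($i\ge2$) starting at a distributing vertex; $B(s)$ is the concatenation, in order, of the back words of all $v_i$ ($i\le n-1$) ending at a collecting vertex and of $v_n$. A Rauzy scheme for $W$ is a graph with words such that: (1) it has more than one edge; (2) front words of edges leaving a common distributing vertex have pairwise distinct first letters,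 and back words of edges entering a common collecting vertex have pairwise distinct last letters; (3) $F(s)=B(s)$ for every symmetric path $s$; (4) for symmetric paths $s_1,s_2$ and $k\ge1$, $F(s_1)\sqsubseteq_k F(s_2)$ implies $s_1\sqsubseteq_k s_2$; (5) all words on edges are factors of $W$; (6) every factor of $W$ is a factor of $F(s)$ for some symmetric path $s$; (7) for every edge $e$ there is a factor $u_e$ of $W$ such that every symmetric path $s$ with $u_e\sqsubseteq F(s)$ passes through $e$. *)

(* Defs.v *)
From mathcomp Require Import all_boot.
Set Implicit Arguments. Unset Strict Implicit. Unset Printing Implicit Defensive.

Section Words.
Variable T : eqType.

Definition occ (u w : seq T) : nat :=
  count (fun i => take (size u) (drop i w) == u) (iota 0 (size w - size u).+1).

Definition factor_k (k : nat) (u w : seq T) : Prop := k <= occ u w.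
Definition factor (u w : seq T) : Prop := factor_k 1 u w.

Definition occurs_at (W : nat -> T) (u : seq T) (i : nat) : Prop :=
  u = mkseq (fun j => W (i + j)) (size u).
Definition factorW (W : nat -> T) (u : seq T) : Prop := exists i, occurs_at W u i.
Definition recurrent (W : nat -> T) : Prop :=
  forall u, factorW W u -> forall N, exists2 i, N <= i & occurs_at W u i.
End Words.

Record graph_words (T : eqType) := GraphWords {
  gV : finType; gE : finType;
  src : gE -> gV; tgt : gE -> gV;
  Fw : gE -> seq T;
  Bw : gE -> seq T
}.

Section Graph.
Variables (T : eqType) (G : graph_words T).

Definition indeg (v : gV G) := #|[pred e : gE G | tgt e == v]|.
Definition outdeg (v : gV G) := #|[pred e : gE G | src e == v]|.
Definition distributing (v : gV G) := (indeg v == 1) && (1 < outdeg v).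
Definition collecting (v : gV G) := (1 < indeg v) && (outdeg v == 1).

Definition adj : rel (gV G) := fun x y => [exists e, (src e == x) && (tgt e == y)].
Definition strongly_connected := forall x y, connect adj x y.

Definition is_graph_with_words :=
  strongly_connected /\ forall v, distributing v || collecting v.

Definition is_path (p : seq (gE G)) :=
  (p != [::]) && sorted (fun e f => tgt e == src f) p.

Definition symmetric (p : seq (gE G)) :=
  if p is e :: t then [&& is_path p, collecting (src e) & distributing (tgt (last e t))]
  else false.

Definition Fp (p : seq (gE G)) : seq T :=
  if p is e :: t then Fw e ++ flatten [seq Fw f | f <- t & distributing (src f)]
  else [::].

Definition Bp (p : seq (gE G)) : seq T :=
  if p is e :: t then
    flatten [seq Bw f | f <- belast e t & collecting (tgt f)] ++ Bw (last e t)
  else [::].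

Definition first_letter (w : seq T) := ohead w.
Definition last_letter (w : seq T) := ohead (rev w).

Definition rauzy_scheme (W : nat -> T) : Prop :=
  [/\ is_graph_with_words,
      [/\ 
      1 < #|gE G|,
      ((forall e f : gE G, e != f -> src e = src f -> distributing (src e) ->
         first_letter (Fw e) != None /\ first_letter (Fw e) != first_letter (Fw f)) /\
      (forall e f : gE G, e != f -> tgt e = tgt f -> collecting (tgt e) ->
         last_letter (Bw e) != None /\ last_letter (Bw e) != last_letter (Bw f))),
      (* (3) *) (forall s, symmetric s -> Fp s = Bp s) &
     
      (* (4) *) (forall s1 s2 k, symmetric s1 -> symmetric s2 -> 1 <= k ->
                   factor_k k (Fp s1) (Fp s2) -> factor_k k s1 s2)],
      (forall e : gE G, factorW W (Fw e) /\ factorW W (Bw e)),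
      (* (6) *) (forall u, factorW W u -> exists2 s, symmetric s & factor u (Fp s)) &
      (forall e : gE G, exists u, factorW W u /\
                   forall s, symmetric s -> factor u (Fp s) -> e \in s)].

Definition lmax : nat := \max_(e : gE G) maxn (size (Fw e)) (size (Bw e)).

Definition SA (A : seq T) (s : seq (gE G)) := symmetric s /\ factor (Fp s) A.

Definition nonextendable (A : seq T) (s : seq (gE G)) :=
  SA A s /\ ~ exists s', [/\ SA A s', factor s s' & s' <> s].
End Graph.

(* Main.v *)
Require Import Defs.
From mathcomp Require Import all_boot zify.
Set Implicit Arguments. Unset Strict Implicit. Unset Printing Implicit Defensive.

Section WordL.
Variable T : eqType.
Implicit Types u w l r : seq T.

Definition occl u w :=
  [seq i <- iota 0 (size w - size u).+1 | take (size u) (drop i w) == u].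

Lemma occE u w : occ u w = size (occl u w).
Proof. by rewrite /occ /occl size_filter. Qed.

Lemma occl_uniq u w : uniq (occl u w).
Proof. by rewrite filter_uniq // iota_uniq. Qed.

Lemma mem_occl u w q :
  (q \in occl u w) <-> exists l r, w = l ++ u ++ r /\ size l = q.
Proof.
rewrite mem_filter mem_iota add0n ltnS /=; split.
- case/andP=> /eqP H Hq.
  have Hq' : q <= size w by apply: leq_trans Hq (leq_subr _ _).
  exists (take q w), (drop (size u) (drop q w)); split.
  + by rewrite -{1}H !cat_take_drop.
  + by rewrite size_takel.
- case=> l [r [-> <-]].
  rewrite drop_size_cat // take_size_cat // eqxx /= !size_cat.
  lia.
Qed.

Lemma factorP u w : factor u w <-> exists l r, w = l ++ u ++ r.
Proof.
rewrite /factor /factor_k occE; split.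
- case E: (occl u w) => [|q s] //= _.
  have : q \in occl u w by rewrite E mem_head.
  by case/mem_occl=> l [r [H _]]; exists l, r.
- case=> l [r H].
  have : size l \in occl u w by apply/mem_occl; exists l, r.
  by case: (occl u w).
Qed.

Lemma factor_size u w : factor u w -> size u <= size w.
Proof. by case/factorP=> l [r ->]; rewrite !size_cat; lia. Qed.

Lemma factor_rev u w : factor u w -> factor (rev u) (rev w).
Proof.
case/factorP=> l [r ->]; apply/factorP; exists (rev r), (rev l).
by rewrite !rev_cat catA.
Qed.

Lemma occ_rev_le u w : occ u w <= occ (rev u) (rev w).
Proof.
rewrite !occE.
rewrite -(size_map (fun q => size w - size u - q)).
apply: uniq_leq_size.
- rewrite map_inj_in_uniq ?occl_uniq // => a b.
  move=> /mem_occl[l1 [r1 [E1 <-]]] /mem_occl[l2 [r2 [E2 <-]]].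
  have : size w = size l1 + size u + size r1 by rewrite E1 !size_cat addnA.
  have : size w = size l2 + size u + size r2 by rewrite E2 !size_cat addnA.
  lia.
- move=> x /mapP[q /mem_occl[l [r [E <-]]] ->].
  apply/mem_occl; exists (rev r), (rev l); split.
  + by rewrite E !rev_cat catA.
  + by rewrite size_rev E !size_cat; lia.
Qed.

Lemma occ_rev u w : occ (rev u) (rev w) = occ u w.
Proof.
apply/eqP; rewrite eqn_leq occ_rev_le andbT.
by rewrite -{2}(revK u) -{2}(revK w) occ_rev_le.
Qed.

Lemma factorW_factor (W : nat -> T) A u : factorW W A -> factor u A -> factorW W u.
Proof.
case=> i HA /factorP[l [r EA]].
exists (i + size l).
apply: (@eq_from_nth _ (W 0)); first by rewrite size_mkseq.
move=> k hk.
rewrite nth_mkseq //.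
have : nth (W 0) A (size l + k) = W (i + (size l + k)).
  rewrite HA nth_mkseq // EA !size_cat; lia.
rewrite EA nth_cat ltnNge leq_addr /= addKn nth_cat hk => ->.
by rewrite addnA.
Qed.

End WordL.

Section GraphL.
Variables (T : eqType) (G : graph_words T).
Implicit Types p q s t a b c l m r : seq (gE G).

Lemma sym_iff x p : Defs.symmetric p =
  [&& is_path p, collecting (src (head x p)) & distributing (tgt (last x p))].
Proof. by case: p. Qed.

Lemma Fp_cat p r : p != [::] ->
  Fp (p ++ r) = Fp p ++ flatten [seq Fw f | f <- r & distributing (src f)].
Proof. by case: p => //= e p _; rewrite filter_cat map_cat flatten_cat catA. Qed.

Lemma Bp_rcons q z :
  Bp (rcons q z) = flatten [seq Bw f | f <- q & collecting (tgt f)] ++ Bw z.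
Proof. by case: q => [|e q] //=; rewrite belast_rcons last_rcons. Qed.

Lemma Bp_cat l s : s != [::] ->
  Bp (l ++ s) = flatten [seq Bw f | f <- l & collecting (tgt f)] ++ Bp s.
Proof.
case/lastP: s => [|s z] // _.
by rewrite -rcons_cat !Bp_rcons filter_cat map_cat flatten_cat catA.
Qed.

Lemma path_infix a b c : is_path (a ++ b ++ c) -> b != [::] -> is_path b.
Proof.
rewrite /is_path => /andP[_ H] ->.
by case: (cat_sorted2 H) => _ /cat_sorted2[].
Qed.

Lemma junction p e m x : is_path (p ++ e :: m) -> p != [::] -> tgt (last x p) = src e.
Proof.
case: p => // a p /andP[_ /=]; rewrite cat_path => /andP[_ /= /andP[/eqP -> _]] _.
done.
Qed.

Lemma find_lem m (P : pred (gV G)) :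
  sorted (fun e f => tgt e == src f) m ->
  [seq f <- behead (take (find (fun f => P (tgt f)) m).+1 m) | P (src f)] = [::].
Proof.
elim: m => [|a m IH] //=.
case: m IH => [|b m] IH /=; first by case: (P (tgt a)).
case/andP=> /eqP hab hs.
case Pa: (P (tgt a)) => //=.
by rewrite -hab Pa /=; apply: IH.
Qed.

End GraphL.

Section Core.
Variables (T : eqType) (G : graph_words T) (A : seq T) (L : nat).
Implicit Types p q s t a b c l m r : seq (gE G).
Hypothesis H2 : forall e : gE G, distributing (src e) -> Fw e != [::].
Hypothesis H3 : forall s, Defs.symmetric s -> Fp s = Bp s.
Hypothesis H4 : forall s t, Defs.symmetric s -> Defs.symmetric t ->
  0 < occ (Fp s) (Fp t) -> occ (Fp s) (Fp t) <= occ s t.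
Hypothesis H6 : forall u, factor u A -> exists2 t : seq (gE G), Defs.symmetric t & factor u (Fp t).
Hypothesis HL : forall e : gE G, size (Fw e) <= L.

Lemma catne (X : eqType) (a b : seq X) : b != [::] -> a ++ b != [::].
Proof. by case: a; case: b. Qed.

Lemma catne1 (X : eqType) (a b : seq X) : a != [::] -> a ++ b != [::].
Proof. by case: a. Qed.

Lemma catsI (X0 : eqType) (a b c : seq X0) : a ++ b = a ++ c -> b = c.
Proof. by elim: a => //= x a IH [] /IH. Qed.

Lemma Fgrow p e m x : is_path (p ++ e :: m) -> p != [::] ->
  distributing (tgt (last x p)) -> size (Fp p) < size (Fp (p ++ e :: m)).
Proof.
move=> Hp Hn Hd; rewrite Fp_cat // size_cat.
rewrite (junction x Hp Hn) in Hd.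
rewrite /= Hd /= size_cat.
have := H2 Hd; rewrite -size_eq0; lia.
Qed.

Definition fpos s t (i : nat) := size (Fp (take (i + size s) t)) - size (Fp s).

Lemma occ_dec s t (i : nat) : i \in occl s t ->
  exists l r, [/\ t = l ++ s ++ r, size l = i & take (i + size s) t = l ++ s].
Proof.
case/mem_occl=> l [r [E Hs]]; exists l, r; split=> //.
by rewrite E catA take_size_cat // size_cat Hs.
Qed.

Lemma pos_in s t (i : nat) : Defs.symmetric s -> Defs.symmetric t -> i \in occl s t ->
  exists X Y, Fp t = X ++ Fp s ++ Y /\ Fp (take (i + size s) t) = X ++ Fp s.
Proof.
case: s => [|e s'] // Hs Ht /occ_dec [l [r [E Hl Ep]]].
set s := e :: s' in Hs E Ep *.
have Hpt : is_path t by move: Ht; rewrite (sym_iff e) => /and3P[].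
have Hpp : is_path (l ++ s).
  have := @path_infix _ _ [::] (l ++ s) r; rewrite /= -catA -E.
  by move=> H; apply: H => //; apply: catne.
have Hsp : Defs.symmetric (l ++ s).
  rewrite (sym_iff e) Hpp /=.
  move: Hs Ht; rewrite !(sym_iff e) E => /and3P[_ Hc Hd] /and3P[_ Hc' _].
  rewrite last_cat /=.
  destruct l as [|a l']; simpl in *; first by rewrite Hc.
  by rewrite Hc'.
move: (H3 Hsp); rewrite Bp_cat // -(H3 Hs) => HF.
exists (flatten [seq Bw f | f <- l & collecting (tgt f)]),
       (flatten [seq Fw f | f <- r & distributing (src f)]).
rewrite Ep HF; split=> //.
by rewrite E catA Fp_cat; [rewrite HF catA | apply: catne].
Qed.

Lemma fpos_in s t (i : nat) : Defs.symmetric s -> Defs.symmetric t -> i \in occl s t ->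
  fpos s t i \in occl (Fp s) (Fp t).
Proof.
move=> Hs Ht Hi; case: (pos_in Hs Ht Hi) => X [Y [E1 E2]].
apply/mem_occl; exists X, Y; split=> //.
by rewrite /fpos E2 size_cat addnK.
Qed.

Lemma fpos_mono s t (i j : nat) : Defs.symmetric s -> Defs.symmetric t ->
  i \in occl s t -> j \in occl s t -> i < j -> fpos s t i < fpos s t j.
Proof.
case: s => [|e0 s'] // Hs Ht Hi Hj Hij.
set s := e0 :: s' in Hs Hi Hj *.
case: (pos_in Hs Ht Hi) => X [Y [_ E2]].
have Hlt : size (Fp (take (i + size s) t)) < size (Fp (take (j + size s) t)).
  case: (occ_dec Hj) => l' [r' [Et Hl' _]].
  have Hsz : size t = j + size s + size r' by rewrite Et !size_cat -Hl' addnA.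
  have -> : j + size s = (i + size s) + (j - i) by lia.
  case: (occ_dec Hi) => l [r [_ _ Ep]].
  have Hpt : is_path t by move: Ht; rewrite (sym_iff e0) => /and3P[].
  have Hpj : is_path (take (i + size s) t ++ take (j - i) (drop (i + size s) t)).
    rewrite -takeD.
    apply: (@path_infix _ _ [::] _ (drop (i + size s + (j - i)) t));
      rewrite ?cat0s ?cat_take_drop //.
    rewrite -size_eq0 size_take; case: ltnP => H0.
    lia. rewrite Hsz; lia.
  rewrite [take (_ + (j - i)) t]takeD; move: Hpj.
  case Em: (take (j - i) (drop (i + size s) t)) => [|e m] Hpj.
    by move: (congr1 size Em); rewrite size_take size_drop Hsz; case: ltnP => _ /=; lia.
  apply: (@Fgrow _ _ _ e0 Hpj).
  - by rewrite Ep; apply: catne.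
  - rewrite Ep last_cat /=. by move: Hs; rewrite (sym_iff e0) => /and3P[].
rewrite /fpos; have : size (Fp s) <= size (Fp (take (i + size s) t))
  by rewrite E2 size_cat leq_addl.
lia.
Qed.

Lemma pos_all s t (q : nat) : Defs.symmetric s -> Defs.symmetric t ->
  q \in occl (Fp s) (Fp t) -> exists2 i, i \in occl s t & q = fpos s t i.
Proof.
move=> Hs Ht Hq.
have Hu : uniq (map (fpos s t) (occl s t)).
  rewrite map_inj_in_uniq ?occl_uniq // => a b Ha Hb Hab.
  case: (ltngtP a b) => // h.
  - by move: (fpos_mono Hs Ht Ha Hb h); rewrite Hab ltnn.
  - by move: (fpos_mono Hs Ht Hb Ha h); rewrite Hab ltnn.
have Hsub : {subset map (fpos s t) (occl s t) <= occl (Fp s) (Fp t)}.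
  by move=> x /mapP[i Hi ->]; apply: fpos_in.
have Hsz : size (occl (Fp s) (Fp t)) <= size (map (fpos s t) (occl s t)).
  rewrite size_map -!occE; apply: H4 => //.
  by rewrite occE; case: (occl _ _) Hq.
case: (uniq_min_size Hu Hsub Hsz) => _ /(_ q); rewrite Hq => /mapP[i Hi ->].
by exists i.
Qed.

Lemma core s Lp R : Defs.symmetric s -> A = Lp ++ Fp s ++ R -> L < size R ->
  exists s', [/\ SA A s', factor s s' & s' <> s].
Proof.
case: s => [|e0 s0] // Hs EA HR.
set s := e0 :: s0 in Hs EA *.
have Hu : factor (Fp s ++ R) A by apply/factorP; exists Lp, [::]; rewrite cats0.
case: (H6 Hu) => t Ht /factorP [L' [R' Et]].
have Hq : size L' \in occl (Fp s) (Fp t).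
  by apply/mem_occl; exists L', (R ++ R'); rewrite Et -!catA.
case: (pos_all Hs Ht Hq) => i Hi Hqi.
case: (pos_in Hs Ht Hi) => X [Y [E1 E2]].
case: (occ_dec Hi) => l [r [Et2 Hl Ep]].
have Hpt : is_path t by move: Ht; rewrite (sym_iff e0) => /and3P[].
have EFt : Fp t = X ++ Fp s ++ flatten [seq Fw f | f <- r & distributing (src f)].
  rewrite {1}Et2 catA Fp_cat; last by apply: catne.
  by rewrite -Ep E2 -catA.
have HX : size X = size L'.
  by rewrite Hqi /fpos E2 size_cat addnK.
have E3 : X ++ (Fp s ++ flatten [seq Fw f | f <- r & distributing (src f)])
          = L' ++ (Fp s ++ (R ++ R')) by rewrite -EFt Et -!catA.
move/eqP: E3; rewrite eqseq_cat // => /andP[_ /eqP /catsI EY].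
clear EFt; case: r Et2 EY => [|e m] Et2 EY.
  by move: (congr1 size EY); rewrite /= size_cat; lia.
have Hpt2 : is_path ((l ++ s) ++ e :: m) by rewrite -catA -Et2.
have Hde : distributing (src e).
  rewrite -(junction e0 Hpt2); last by apply: catne.
  rewrite last_cat /=; by move: Hs; rewrite (sym_iff e0) => /and3P[].
have Hpm : sorted (fun e f => tgt e == src f) (e :: m).
  by move: Hpt2; rewrite /is_path => /andP[_ /cat_sorted2[]].
set j := find (fun f => distributing (tgt f)) (e :: m).
have Hhas : has (fun f => distributing (tgt f)) (e :: m).
  apply/hasP; exists (last e m); first exact: mem_last.
  move: Ht; rewrite (sym_iff e0) Et2 => /and3P[_ _].
  by rewrite !last_cat /=.
have Hj : j < size (e :: m) by rewrite -has_find.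
have Hk : flatten [seq Fw f | f <- take j.+1 (e :: m) & distributing (src f)] = Fw e.
  have := find_lem (@distributing _ G) Hpm; rewrite -/j /= Hde /= => ->.
  by rewrite cats0.
move: EY; rewrite -(cat_take_drop j.+1 (e :: m)) filter_cat map_cat flatten_cat Hk.
move=> EY.
have HR2 : R = Fw e ++ drop (size (Fw e)) R.
  have Hsz : size (Fw e) <= size R by apply: leq_trans (HL e) (ltnW HR).
  have : take (size (Fw e)) (Fw e ++ flatten [seq Fw f | f <- drop j.+1 (e :: m)
            & distributing (src f)]) = take (size (Fw e)) (R ++ R') by rewrite EY.
  rewrite take_size_cat // take_cat ltn_neqAle Hsz andbT.
  case: eqP => [Heq|_] /=; last by move=> H; rewrite {1}H cat_take_drop.
  by rewrite Heq subnn take0 cats0 => H; rewrite drop_size cats0.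
exists (s ++ take j.+1 (e :: m)); split.
- split.
  + rewrite (sym_iff e0) /=.
    have -> : is_path (e0 :: s0 ++ take j.+1 (e :: m)).
      apply: (@path_infix _ _ l _ (drop j.+1 (e :: m))) => //.
      have -> : (e0 :: s0 ++ take j.+1 (e :: m)) ++ drop j.+1 (e :: m) = s ++ e :: m.
        by rewrite -[e0 :: s0 ++ _]/(s ++ _) -catA cat_take_drop.
      by rewrite -Et2.
    move: (Hs); rewrite (sym_iff e0) => /and3P[_ -> _] /=.
    rewrite last_cat -[e :: take j m]/(take j.+1 (e :: m)) (take_nth e Hj) last_rcons.
    exact: (nth_find e Hhas).
  + rewrite Fp_cat // Hk; apply/factorP; exists Lp, (drop (size (Fw e)) R).
    by rewrite EA {1}HR2 -!catA.
- by apply/factorP; exists [::], (take j.+1 (e :: m)).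
- by move/(congr1 size); rewrite size_cat /=; lia.
Qed.

End Core.

Section Rev.
Variables (T : eqType) (G : graph_words T).

Definition Gr : graph_words T :=
  @GraphWords T (gV G) (gE G) (@tgt T G) (@src T G)
    (fun e => rev (Bw e)) (fun e => rev (Fw e)).

Lemma distr_r (v : gV G) : @distributing T Gr v = collecting v.
Proof. by rewrite /distributing /collecting andbC. Qed.

Lemma coll_r (v : gV G) : @collecting T Gr v = distributing v.
Proof. by rewrite /distributing /collecting andbC. Qed.

Lemma is_path_r (p : seq (gE G)) : @is_path T Gr (rev p) = is_path p.
Proof.
rewrite /is_path rev_sorted.
have -> : (rev p != [::]) = (p != [::]) by case: p => // x p; rewrite rev_cons; case: (rev p).
case: p => //= x p; apply: eq_path => a b /=; exact: eq_sym.
Qed.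

Lemma sym_r (p : seq (gE G)) : @Defs.symmetric T Gr (rev p) = Defs.symmetric p.
Proof.
case: p => [|e q] //.
rewrite (sym_iff e) (@sym_iff _ Gr e) is_path_r.
rewrite rev_cons last_rcons distr_r coll_r /=.
case/lastP: q => [|q z] //=.
  by rewrite andbC.
by rewrite rev_rcons /= last_rcons; case: (is_path _); case: (collecting _); case: (distributing _).
Qed.

Lemma Fp_r (p : seq (gE G)) : @Fp T Gr (rev p) = rev (Bp p).
Proof.
case/lastP: p => [|q z] //.
rewrite rev_rcons Bp_rcons rev_cat /=; congr (_ ++ _).
rewrite rev_flatten -map_comp -map_rev -filter_rev.
congr (flatten (map _ _)); apply: eq_filter => x; exact: distr_r.
Qed.

Lemma Bp_r (p : seq (gE G)) : @Bp T Gr (rev p) = rev (Fp p).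
Proof.
case: p => [|e q] //.
rewrite rev_cons (@Bp_rcons _ Gr) /= rev_cat; congr (_ ++ _).
rewrite rev_flatten -map_comp -map_rev -filter_rev.
congr (flatten (map _ _)); apply: eq_filter => x; exact: coll_r.
Qed.

End Rev.
Unset Implicit Arguments. Set Strict Implicit.

Theorem lemma7p2 (T : eqType) (W : nat -> T) (G : graph_words T) (A : seq T)
  (s : seq (gE G)) :
  recurrent W -> rauzy_scheme G W -> factorW W A -> nonextendable A s ->
  size A - 2 * lmax G <= size (Fp s) <= size A.
Proof.
move=> Hrec [Hgw [H1 [H2a H2b] H3 H4] H5 H6 H7] HA [[Hs HsA] Hne].
rewrite (factor_size HsA) andbT.
rewrite leqNgt; apply/negP => Hlt.
case/factorP: HsA => Lp [R EA].
have Hsz : size A = size Lp + size (Fp s) + size R by rewrite EA !size_cat addnA.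
have HL : forall e : gE G, size (Fw e) <= lmax G.
  by move=> e; apply: leq_trans (leq_maxl _ _) (leq_bigmax e).
have HLb : forall e : gE G, size (Bw e) <= lmax G.
  by move=> e; apply: leq_trans (leq_maxr _ _) (leq_bigmax e).
have Hout : forall e : gE G, 1 < outdeg (src e) -> exists f, f != e /\ src f = src e.
  move=> e h.
  case: (boolP [exists f, (f != e) && (src f == src e)]).
    by case/existsP=> f /andP[h1 /eqP h2]; exists f.
  move=> hn; exfalso.
  have key : outdeg (src e) <= 1.
    rewrite /outdeg -(card1 e); apply: subset_leq_card; apply/subsetP => f.
    rewrite !inE => hf; apply/negPn/negP => hfe.
    by move/negP: hn; apply; apply/existsP; exists f; rewrite hfe hf.
  lia.
have Hin : forall e : gE G, 1 < indeg (tgt e) -> exists f, f != e /\ tgt f = tgt e.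
  move=> e h.
  case: (boolP [exists f, (f != e) && (tgt f == tgt e)]).
    by case/existsP=> f /andP[h1 /eqP h2]; exists f.
  move=> hn; exfalso.
  have key : indeg (tgt e) <= 1.
    rewrite /indeg -(card1 e); apply: subset_leq_card; apply/subsetP => f.
    rewrite !inE => hf; apply/negPn/negP => hfe.
    by move/negP: hn; apply; apply/existsP; exists f; rewrite hfe hf.
  lia.
have H2' : forall e : gE G, distributing (src e) -> Fw e != [::].
  move=> e hd; move: (hd) => /andP[_ /Hout[f [hf hs]]].
  have hfe : e != f by rewrite eq_sym.
  have [] := H2a e f hfe (esym hs) hd.
  by case: (Fw e).
have H2r : forall e : gE G, collecting (tgt e) -> Bw e != [::].
  move=> e hd; move: (hd) => /andP[/Hin[f [hf hs]] _].
  have hfe : e != f by rewrite eq_sym.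
  have [] := H2b e f hfe (esym hs) hd.
  by rewrite /last_letter; case: (Bw e) => //= x l; rewrite rev_cons; case: (rev l).
have H4' : forall s1 t1 : seq (gE G), Defs.symmetric s1 -> Defs.symmetric t1 ->
    0 < occ (Fp s1) (Fp t1) -> occ (Fp s1) (Fp t1) <= occ s1 t1.
  move=> s1 t1 h1 h2 h; exact: (H4 s1 t1 (occ (Fp s1) (Fp t1)) h1 h2 h (leqnn _)).
have H6' : forall u, factor u A ->
    exists2 t : seq (gE G), Defs.symmetric t & factor u (Fp t).
  by move=> u hu; apply: H6; apply: factorW_factor HA hu.
case: (ltnP (lmax G) (size R)) => hR.
  case: (core H2' H3 H4' H6' HL Hs EA hR) => s' [h1 h2 h3].
  by apply: Hne; exists s'.
have hL : lmax G < size Lp by lia.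
have H2'' : forall e : gE (Gr G), distributing (src e) -> Fw e != [::].
  move=> e; rewrite /= distr_r => h.
  by rewrite -size_eq0 size_rev size_eq0; apply: H2r.
have H3'' : forall s1 : seq (gE (Gr G)), Defs.symmetric s1 -> Fp s1 = Bp s1.
  move=> s1; rewrite -(revK s1) sym_r Fp_r Bp_r => h; by rewrite H3.
have H4'' : forall s1 t1 : seq (gE (Gr G)), Defs.symmetric s1 -> Defs.symmetric t1 ->
    0 < occ (Fp s1) (Fp t1) -> occ (Fp s1) (Fp t1) <= occ s1 t1.
  move=> s1 t1 h1 h2.
  have h1' : Defs.symmetric (G:=G) (rev s1) by rewrite -(@sym_r _ G (rev s1)) revK.
  have h2' : Defs.symmetric (G:=G) (rev t1) by rewrite -(@sym_r _ G (rev t1)) revK.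
  have E1 : Fp (G:=Gr G) s1 = rev (Fp (G:=G) (rev s1)) by rewrite -{1}(revK s1) (@Fp_r _ G) H3.
  have E2 : Fp (G:=Gr G) t1 = rev (Fp (G:=G) (rev t1)) by rewrite -{1}(revK t1) (@Fp_r _ G) H3.
  rewrite E1 E2 occ_rev -(occ_rev s1 t1) => h.
  exact: (H4' _ _ h1' h2' h).
have H6'' : forall u, factor u (rev A) ->
    exists2 t : seq (gE (Gr G)), Defs.symmetric t & factor u (Fp t).
  move=> u hu; have := factor_rev hu; rewrite revK => /H6'[t0 ht0 hf].
  exists (rev t0); first by rewrite sym_r.
  by rewrite Fp_r -(H3 _ ht0) -(revK u); apply: factor_rev.
have HL'' : forall e : gE (Gr G), size (Fw e) <= lmax G.
  by move=> e; rewrite /= size_rev.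
have Hs'' : Defs.symmetric (G := Gr G) (rev s) by rewrite sym_r.
have EA'' : rev A = rev R ++ Fp (G := Gr G) (rev s) ++ rev Lp.
  by rewrite Fp_r -(H3 _ Hs) EA !rev_cat catA.
have hL'' : lmax G < size (rev Lp) by rewrite size_rev.
case: (core H2'' H3'' H4'' H6'' HL'' Hs'' EA'' hL'') => s2 [[hs2 hf2] hfs hne].
apply: Hne; exists (rev s2).
have hs2' : Defs.symmetric (G:=G) (rev s2) by move: hs2; rewrite -(revK s2) (@sym_r _ G) revK.
split.
- split=> //.
  have : Fp (G := Gr G) s2 = rev (Fp (G:=G) (rev s2)).
    by rewrite -{1}(revK s2) (@Fp_r _ G) H3.
  move=> E; move: hf2; rewrite E => /factor_rev; rewrite !revK //.
- by move/factor_rev: hfs; rewrite revK.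
- by move=> E; apply: hne; rewrite -E revK.
Qed.
Print Assumptions lemma7p2.
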